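(* Let $r\ge2$, $m=2$, $a_{ij}\in\mathbb{C}$ ($i=1,2$, $1\le j\le r$), $f_i=\sum_{j=1}^r a_{ij}z_j$, and let $S_1$ be the family $(z_1^2,\dots,z_r^2,f_1^2,f_2^2)$. Then $S_1$ is linearly dependent if and only if at least one of the following holds: (a) there are two members of $S_1$ (with distinct indices) that are linearly dependent, i.e. one is a scalar multiple of the other; (b) there exist $1\le M\ne N\le r$ such that $a_{1i}=a_{2i}=0$ for all $i\notin\{M,N\}$, i.e. $f_1=a_{1M}z_M+a_{1N}z_N$ and $f_2=a_{2M}z_M+a_{2N}z_N$.
   Context: A family of polynomials is linearly independent over $\mathbb{C}$ if no nontrivial $\mathbb{C}$-linear combination of its members (counted with their indices) vanishes; otherwise it is linearly dependent. *)

(* Defs.v *)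
From HB Require Import structures.
From mathcomp Require Import all_boot all_order all_algebra.
From mathcomp Require Import complex.
From mathcomp Require Import Rstruct.
From mathcomp Require Import mpoly.
Set Implicit Arguments. Unset Strict Implicit. Unset Printing Implicit Defensive.
Import GRing.Theory.
Local Open Scope ring_scope.

Definition Cplx : Type := complex Rdefinitions.R.

Definition lin_dep (I : finType) (n : nat) (F : I -> {mpoly Cplx[n]}) : Prop :=
  exists c : I -> Cplx, (exists i, c i != 0) /\ \sum_(i : I) c i *: F i = 0.

Definition linf (r : nat) (a : 'I_2 -> 'I_r -> Cplx) (k : 'I_2) : {mpoly Cplx[r]} :=
  \sum_(j < r) a k j *: 'X_j.

Definition S1 (r : nat) (a : 'I_2 -> 'I_r -> Cplx) (i : 'I_(r + 2)) : {mpoly Cplx[r]} :=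
  match split i with
  | inl j => 'X_j ^+ 2
  | inr k => linf a k ^+ 2
  end.

(* Main.v *)
Require Import Defs.
From HB Require Import structures.
From mathcomp Require Import all_boot all_order all_algebra.
From mathcomp Require Import complex.
From mathcomp Require Import Rstruct.
From mathcomp Require Import mpoly.
From mathcomp Require Import ring.
Import GRing.Theory Num.Theory.
Local Open Scope ring_scope.

Lemma S1l r (a : 'I_2 -> 'I_r -> Cplx) j : S1 a (lshift 2 j) = 'X_j ^+ 2.
Proof. by rewrite /S1 (unsplitK (inl _ j)). Qed.
Lemma S1r r (a : 'I_2 -> 'I_r -> Cplx) k : S1 a (rshift r k) = linf a k ^+ 2.
Proof. by rewrite /S1 (unsplitK (inr _ k)). Qed.

Lemma sum_S1 r (a : 'I_2 -> 'I_r -> Cplx) (c : 'I_(r+2) -> Cplx) :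
  \sum_i c i *: S1 a i = \sum_(j<r) c (lshift 2 j) *: 'X_j^+2
     + \sum_(k<2) c (rshift r k) *: linf a k ^+ 2.
Proof.
rewrite big_split_ord /=; congr (_ + _); apply: eq_bigr => i _.
  by rewrite S1l. by rewrite S1r.
Qed.

Lemma sum2 (V : zmodType) r (F : 'I_r -> V) j l : j != l ->
  (forall i, i != j -> i != l -> F i = 0) -> \sum_i F i = F j + F l.
Proof.
move=> jl H; rewrite (bigD1 j) //= (bigD1 l) /=; last by rewrite eq_sym.
rewrite big1 ?addr0 // => i /andP [il ij]; exact: H.
Qed.
Arguments sum2 {V r F j l}.

Lemma ord2 (k : 'I_2) : k = 0 \/ k = 1.
Proof. case: k => [[|[|m]]] Hk; [left|right|by []]; exact: val_inj. Qed.

Lemma linf_eval r (a : 'I_2 -> 'I_r -> Cplx) k x :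
  meval x (linf a k) = \sum_j a k j * x j.
Proof.
rewrite /linf; elim/big_rec2: _ => [|j y1 y2 _ <-]; first by rewrite meval0.
by rewrite mevalD mevalZ mevalXU.
Qed.

Lemma extract r (a : 'I_2 -> 'I_r -> Cplx) : lin_dep (S1 a) ->
  exists cz : 'I_r -> Cplx, exists cf : 'I_2 -> Cplx,
  ((exists j, cz j != 0) \/ (exists k, cf k != 0)) /\
  \sum_j cz j *: 'X_j^+2 + \sum_k cf k *: linf a k ^+ 2 = 0.
Proof.
case=> c [[i ci] H]; exists (fun j => c (lshift 2 j)), (fun k => c (rshift r k)).
split; last by rewrite -sum_S1.
move: ci; rewrite -(splitK i); case: (split i) => [j|k] /= ci; [left|right].
  by exists j. by exists k.
Qed.

Lemma build r (a : 'I_2 -> 'I_r -> Cplx) cz cf :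
  ((exists j, cz j != 0) \/ (exists k, cf k != 0)) ->
  \sum_j cz j *: 'X_j^+2 + \sum_k cf k *: linf a k ^+ 2 = 0 -> lin_dep (S1 a).
Proof.
move=> nt H; exists (fun i => match split i with inl j => cz j | inr k => cf k end); split.
  case: nt => [[j cj]|[k ck]]; [exists (lshift 2 j)|exists (rshift r k)].
    by rewrite (unsplitK (inl _ j)).
  by rewrite (unsplitK (inr _ k)).
rewrite sum_S1 -[RHS]H; congr (_ + _); apply: eq_bigr => i _.
  by rewrite (unsplitK (inl _ i)).
by rewrite (unsplitK (inr _ i)).
Qed.

Lemma pairA r (a : 'I_2 -> 'I_r -> Cplx) (i j : 'I_(r+2)) c1 c2 : i != j ->
  (c1 != 0) \/ (c2 != 0) -> c1 *: S1 a i + c2 *: S1 a j = 0 ->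
  exists i j : 'I_(r + 2), i != j /\
      lin_dep (fun b : bool => if b then S1 a i else S1 a j).
Proof.
move=> ij nt H; exists i, j; split=> //; exists (fun b => if b then c1 else c2); split.
  by case: nt => h; [exists true|exists false].
by rewrite big_bool.
Qed.

Lemma AtoDep r (a : 'I_2 -> 'I_r -> Cplx) :
  (exists i j : 'I_(r + 2), i != j /\
      lin_dep (fun b : bool => if b then S1 a i else S1 a j)) -> lin_dep (S1 a).
Proof.
case=> i [j [ij [c [[b cb] H]]]]; rewrite big_bool /= in H.
have ji : j != i by rewrite eq_sym.
exists (fun k => if k == i then c true else if k == j then c false else 0); split.
  case: b cb => cb; [exists i; by rewrite eqxx | exists j; by rewrite (negbTE ji) eqxx].
rewrite (sum2 ij); last first.
  by move=> k ki kj; rewrite (negbTE ki) (negbTE kj) scale0r.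
by rewrite eqxx (negbTE ji) eqxx.
Qed.

Lemma lshift_rshift r (j : 'I_r) (k : 'I_2) : lshift 2 j != rshift r k.
Proof.
apply/eqP => /(congr1 val) /= E; have := ltn_ord j; rewrite E.
by rewrite ltnNge leq_addr.
Qed.

Lemma rr01 r : rshift r (0 : 'I_2) != rshift r 1.
Proof. by apply/eqP => /(congr1 val) /= /eqP; rewrite eqn_add2l. Qed.

Lemma linf_single r (a : 'I_2 -> 'I_r -> Cplx) k j :
  (forall l, l != j -> a k l = 0) -> linf a k = a k j *: 'X_j.
Proof.
move=> H; rewrite /linf (bigD1 j) //= big1 ?addr0 // => l lj.
by rewrite H // scale0r.
Qed.
Arguments linf_single {r a k j}.

Lemma singleA r (a : 'I_2 -> 'I_r -> Cplx) k j :
  (forall l, l != j -> a k l = 0) ->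
  exists i j : 'I_(r + 2), i != j /\
      lin_dep (fun b : bool => if b then S1 a i else S1 a j).
Proof.
move=> H; apply: (@pairA r a (lshift 2 j) (rshift r k) (a k j ^+ 2) (-1)).
- exact: lshift_rshift.
- by right; rewrite oppr_eq0 oner_eq0.
- by rewrite S1l S1r (linf_single H) exprZn scaleN1r subrr.
Qed.

Lemma propA r (a : 'I_2 -> 'I_r -> Cplx) p q : (p != 0) || (q != 0) ->
  (forall j, q * a 0 j = p * a 1 j) ->
  exists i j : 'I_(r + 2), i != j /\
      lin_dep (fun b : bool => if b then S1 a i else S1 a j).
Proof.
move=> nt H.
have E : q *: linf a 0 = p *: linf a 1.
  by rewrite /linf !scaler_sumr; apply: eq_bigr => j _; rewrite !scalerA H.
apply: (@pairA r a (rshift r 0) (rshift r 1) (q^+2) (-(p^+2))).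
- exact: rr01.
- case/orP: nt => h.
    by right; rewrite oppr_eq0 expf_eq0 (negbTE h) andbF.
  by left; rewrite expf_eq0 (negbTE h) andbF.
- by rewrite !S1r scaleNr -!exprZn E subrr.
Qed.

Lemma sum_I2 (V : zmodType) (F : 'I_2 -> V) : \sum_(k < 2) F k = F 0 + F 1.
Proof. rewrite big_ord_recl big_ord1; congr (F _ + F _); exact: val_inj. Qed.

Lemma twoB r (a : 'I_2 -> 'I_r -> Cplx) M N : M != N ->
  (forall i : 'I_r, i != M -> i != N -> a 0 i = 0 /\ a 1 i = 0) -> lin_dep (S1 a).
Proof.
move=> MN H.
have NM : N != M by rewrite eq_sym.
have L k : linf a k = a k M *: 'X_M + a k N *: 'X_N.
  rewrite /linf (sum2 MN) // => i iM iN; case: (H i iM iN) => h0 h1.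
  by case: (ord2 k) => ->; rewrite ?h0 ?h1 scale0r.
have [z|nz] := eqVneq (a 0 M * a 0 N) 0.
  apply: AtoDep; move/eqP: z; rewrite mulf_eq0 => /orP [] /eqP z.
    apply: (@singleA r a 0 N) => l lN; have [->//|lM] := eqVneq l M.
    by case: (H l lM lN).
  apply: (@singleA r a 0 M) => l lM; have [->//|lN] := eqVneq l N.
  by case: (H l lM lN).
pose d0 := a 1 M * a 1 N; pose d1 := - (a 0 M * a 0 N).
pose cM := - (d0 * a 0 M ^+ 2 + d1 * a 1 M ^+ 2).
pose cN := - (d0 * a 0 N ^+ 2 + d1 * a 1 N ^+ 2).
apply: (@build r a (fun i => if i == M then cM else if i == N then cN else 0)
                   (fun k => if k == 0 then d0 else d1)).
  by right; exists 1 => /=; rewrite oppr_eq0.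
rewrite (sum2 MN); last first.
  by move=> i iM iN; rewrite (negbTE iM) (negbTE iN) scale0r.
rewrite sum_I2 /= eqxx (negbTE NM) eqxx /=.
rewrite !L -!mul_mpolyC /cM /cN /d0 /d1.
ring.
Qed.

Lemma single r (hr : (0 < r)%N) (u : 'I_r -> Cplx) :
  (forall j l, j != l -> u j * u l = 0) -> exists j, forall l, l != j -> u l = 0.
Proof.
move=> H; case: (pickP (fun j => u j != 0)) => [j /= uj | none].
  exists j => l lj; apply/eqP; have jl : j != l by rewrite eq_sym.
  move: (H j l jl) => /eqP.
  by rewrite mulf_eq0 (negbTE uj).
exists (Ordinal hr) => l _; by move: (none l) => /= /negbT /negbNE /eqP.
Qed.

Lemma core r (u v : 'I_r -> Cplx) d0 d1 : d0 != 0 -> d1 != 0 ->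
  (forall j l, j != l -> d0 * u j * u l + d1 * v j * v l = 0) ->
  (exists M N : 'I_r, M != N /\ forall i, i != M -> i != N -> u i = 0 /\ v i = 0)
  \/ (exists p q, ((p != 0) || (q != 0)) /\ forall j, q * u j = p * v j).
Proof.
move=> d0n d1n E.
case: (pickP (fun jl : 'I_r * 'I_r => u jl.1 * v jl.2 - u jl.2 * v jl.1 != 0))
  => [[j l] /= det | none].
  left; exists j, l.
  have jl : j != l by apply/eqP => jl; move: det; rewrite jl subrr eqxx.
  split=> // m mj ml.
  have Ej := E m j mj; have El := E m l ml.
  have hX : d0 * u m * (u j * v l - u l * v j) = 0.
    transitivity ((d0*u m*u j + d1*v m*v j) * v l - (d0*u m*u l + d1*v m*v l) * v j).
      ring.
    by rewrite Ej El !mul0r subrr.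
  have hY : d1 * v m * (u j * v l - u l * v j) = 0.
    transitivity ((d0*u m*u l + d1*v m*v l) * u j - (d0*u m*u j + d1*v m*v j) * u l).
      ring.
    by rewrite Ej El !mul0r subrr.
  move/eqP: hX; rewrite !mulf_eq0 (negbTE d0n) (negbTE det) /= orbF => /eqP ->.
  move/eqP: hY; rewrite !mulf_eq0 (negbTE d1n) (negbTE det) /= orbF => /eqP ->.
  by [].
right.
have M j l : u j * v l = u l * v j.
  by apply: subr0_eq; move: (none (j, l)) => /= /negbT /negbNE /eqP.
case: (pickP (fun k => (u k != 0) || (v k != 0))) => [k /= hk | none2].
  exists (u k), (v k); split=> // j; rewrite mulrC; exact: M.
exists 0, 1; split; first by rewrite oner_eq0 orbT.
move=> j; move: (none2 j) => /= /negbT /norP [/negbNE /eqP -> _].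
by rewrite mulr0 mul0r.
Qed.

Lemma onlyif r (hr : (2 <= r)%N) (a : 'I_2 -> 'I_r -> Cplx) : lin_dep (S1 a) ->
  ((exists i j : 'I_(r + 2), i != j /\
      lin_dep (fun b : bool => if b then S1 a i else S1 a j))
   \/
   (exists M N : 'I_r, M != N /\
      forall i : 'I_r, i != M -> i != N -> a 0 i = 0 /\ a 1 i = 0)).
Proof.
move/extract => [cz [cf [nt H]]].
have Q x : \sum_j cz j * x j ^+ 2 +
   (cf 0 * (\sum_j a 0 j * x j) ^+ 2 + cf 1 * (\sum_j a 1 j * x j) ^+ 2) = 0.
  have E := congr1 (meval x) H; rewrite meval0 mevalD sum_I2 in E.
  rewrite -[RHS]E; congr (_ + _).
    elim/big_rec2: _ => [|j y1 y2 _ ->]; first by rewrite meval0.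
    by rewrite mevalD mevalZ rmorphXn /= mevalXU.
  by rewrite mevalD !mevalZ !rmorphXn /= !linf_eval.
have Q2 j l s t : j != l ->
    cz j * s ^+ 2 + cz l * t ^+ 2 + (cf 0 * (a 0 j * s + a 0 l * t) ^+ 2
      + cf 1 * (a 1 j * s + a 1 l * t) ^+ 2) = 0.
  move=> jl; have lj : l != j by rewrite eq_sym.
  have := Q (fun i => s * (i == j)%:R + t * (i == l)%:R).
  rewrite !(sum2 jl); try by move=> i ij il; rewrite (negbTE ij) (negbTE il) /=; ring.
  rewrite !eqxx (negbTE jl) (negbTE lj) /= => E.
  rewrite -[RHS]E; ring.
have o0 : (0 < r)%N by apply: leq_trans hr.
have E1 j : cz j = - (cf 0 * a 0 j ^+ 2 + cf 1 * a 1 j ^+ 2).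
  have [l jl] : exists l, j != l.
    have [->|h] := eqVneq j (Ordinal o0).
      by exists (Ordinal hr).
    by exists (Ordinal o0).
  apply/eqP; rewrite -subr_eq0; apply/eqP; rewrite -[RHS](Q2 j l 1 0 jl); ring.
have h2 : (2 : Cplx) != 0 by rewrite pnatr_eq0.
have E2 j l : j != l -> cf 0 * a 0 j * a 0 l + cf 1 * a 1 j * a 1 l = 0.
  move=> jl; move: (Q2 j l 1 1 jl); rewrite (E1 j) (E1 l) => E.
  apply: (mulfI h2); rewrite mulr0 -[RHS]E; ring.
have [d00|d0n] := eqVneq (cf 0) 0; have [d10|d1n] := eqVneq (cf 1) 0.
- exfalso; case: nt => [[j]|[k]].
    by rewrite E1 d00 d10 !mul0r addr0 oppr0 eqxx.
  by case: (ord2 k) => ->; rewrite ?d00 ?d10 eqxx.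
- left; have S : forall j l, j != l -> a 1 j * a 1 l = 0.
    move=> j l jl; move: (E2 j l jl); rewrite d00 !mul0r add0r => /eqP.
    by rewrite -mulrA mulf_eq0 (negbTE d1n) /= => /eqP.
  have [j Hj] := @single r o0 (a 1) S.
  exact: (@singleA r a 1 j Hj).
- left; have S : forall j l, j != l -> a 0 j * a 0 l = 0.
    move=> j l jl; move: (E2 j l jl); rewrite d10 !mul0r addr0 => /eqP.
    by rewrite -mulrA mulf_eq0 (negbTE d0n) /= => /eqP.
  have [j Hj] := @single r o0 (a 0) S.
  exact: (@singleA r a 0 j Hj).
- case: (@core r (a 0) (a 1) (cf 0) (cf 1) d0n d1n E2) => [[M [N [MN HH]]] | [p [q [nt' P]]]].
    by right; exists M, N.
  by left; exact: (@propA r a p q nt' P).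
Qed.

Theorem corollary2p2 (r : nat) (hr : (2 <= r)%N) (a : 'I_2 -> 'I_r -> Cplx) :
  lin_dep (S1 a) <->
  ((exists i j : 'I_(r + 2), i != j /\
      lin_dep (fun b : bool => if b then S1 a i else S1 a j))
   \/
   (exists M N : 'I_r, M != N /\
      forall i : 'I_r, i != M -> i != N -> a 0 i = 0 /\ a 1 i = 0)).
Proof.
split; first exact: onlyif.
case=> [A|[M [N [MN H]]]]; [exact: AtoDep | exact: (@twoB r a M N MN H)].
Qed.
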